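(* Let $m\ge1$ and $n\in\mathbb{R}$. Suppose the boxes $b_0,\ldots,b_{m-1}$ are independent variables where each $b_i$ ranges over the whole real interval $[u_i,v_i]$, and $\sum_{i=0}^{m-1}u_i\le n\le\sum_{i=0}^{m-1}v_i$. Then there is no sequence $T=(t_0,\ldots,t_{m-1})$ of reals such that both (1) $\sum_{i}t_i<n$, and (2) for every choice of $B=(b_0,\ldots,b_{m-1})$ in the allowed ranges with $\sum_i b_i\le n$ and every $l\in\{1,\ldots,m\}$, there exists $i$ such that $\sum_{j=i}^{i+l'-1}b_j\le\sum_{j=i}^{i+l'-1}t_j$ for all $l'\in\{1,\ldots,l\}$.
   Context: Indices are taken modulo $m$. The chain $c_i^{l}$ is $(b_i,\ldots,b_{i+l-1})$ with sum $\|c_i^{l}\|=\sum_{j=i}^{i+l-1}b_j$. *)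

(* Defs.v *)
From HB Require Import structures.
From mathcomp Require Import all_boot all_order all_algebra.
Set Implicit Arguments. Unset Strict Implicit. Unset Printing Implicit Defensive.
Import Order.TTheory GRing.Theory Num.Theory.
Local Open Scope ring_scope.

Definition chain_sum (R : realFieldType) (m : nat) (b : nat -> R) (i l : nat) : R :=
  \sum_(i <= j < i + l) b (j %% m)%N.

(* Main.v *)
Require Import Defs.
From HB Require Import structures.
From mathcomp Require Import all_boot all_order all_algebra.
Import Order.TTheory GRing.Theory Num.Theory.
Local Open Scope ring_scope.

Lemma chain_full (R : realFieldType) (m : nat) (f : nat -> R) (i : nat) :
  (1 <= m)%N -> chain_sum m f i m = \sum_(k < m) f k.
Proof.
move=> m1; rewrite /chain_sum; elim: i => [|i IH].
  rewrite add0n big_mkord; apply: eq_bigr => k _; by rewrite modn_small.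
rewrite -IH (big_ltn (m:=i)); last by rewrite -{1}(addn0 i) ltn_add2l.
rewrite addSn big_nat_recr /=; last by rewrite -{1}(addn0 i) ltn_add2l.
by rewrite modnDr addrC.
Qed.

Theorem mainTheorem5 (R : realFieldType) (m : nat) (n : R) (u v : nat -> R) :
  (1 <= m)%N ->
  (forall i, (i < m)%N -> u i <= v i) ->
  \sum_(i < m) u i <= n -> n <= \sum_(i < m) v i ->
  ~ (exists t : nat -> R,
       \sum_(i < m) t i < n /\
       forall b : nat -> R,
         (forall i, (i < m)%N -> u i <= b i <= v i) ->
         \sum_(i < m) b i <= n ->
         forall l, (1 <= l <= m)%N ->
           exists i, (i < m)%N /\
             forall l', (1 <= l' <= l)%N -> chain_sum m b i l' <= chain_sum m t i l').
Proof.
move=> m1 uv hU hV [t [ht H]].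
set U := \sum_(i < m) u i; set V := \sum_(i < m) v i.
pose lam : R := if V == U then 0 else (n - U) / (V - U).
have UV : U <= V by apply: ler_sum => i _; exact: uv.
have [l0 l1] : 0 <= lam /\ lam <= 1.
  rewrite /lam; case: eqP => [_|ne]; first by rewrite lexx ler01.
  have p : 0 < V - U by rewrite subr_gt0 lt_neqAle UV andbT; apply/eqP => e; apply: ne.
  split; first by apply: divr_ge0; rewrite ?subr_ge0 // ltW.
  by rewrite ler_pdivrMr // mul1r lerD2r.
pose b i := u i + lam * (v i - u i).
have sb : \sum_(i < m) b i = n.
  rewrite big_split /= -mulr_sumr sumrB -/U -/V /lam.
  case: eqP => [e|ne]; first by rewrite mul0r addr0; apply/eqP; rewrite eq_le hU /= -e.
  have p : V - U != 0 by rewrite subr_eq0; apply/eqP.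
  by rewrite divfK // addrC subrK.
have hb : forall i, (i < m)%N -> u i <= b i <= v i.
  move=> i im; have d : 0 <= v i - u i by rewrite subr_ge0 uv.
  rewrite /b lerDl mulr_ge0 //=.
  rewrite -lerBrDl; rewrite -{2}(mul1r (v i - u i)); exact: ler_wpM2r.
have sbn : \sum_(i < m) b i <= n by rewrite sb.
have hm : (1 <= m <= m)%N by rewrite m1 leqnn.
have [i [_ Hi]] := H b hb sbn m hm.
have := Hi m hm; rewrite (chain_full _ _ b) // (chain_full _ _ t) // sb => hle.
by move: (le_lt_trans hle ht); rewrite ltxx.
Qed.
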